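(* Let $\widetilde C,\widetilde C',\widetilde C''$ be $r$-perfect $\mathcal S$-complexes, and let $\widetilde\lambda:\widetilde C\to\widetilde C'$ and $\widetilde\lambda':\widetilde C'\to\widetilde C''$ be height $n$ and height $m$ morphisms respectively ($n,m\ge0$). Then $\widetilde\lambda'\widetilde\lambda$ is a height $n+m$ morphism. If moreover $\widetilde\lambda$ is strong height $n$ and $\widetilde\lambda'$ is strong height $m$, then $\widetilde\lambda'\widetilde\lambda$ is strong height $n+m$.
   Context: Let $R$ be a commutative ring; graded modules are $\mathbb Z$-graded, $V[i]_j=V_{i+j}$, differentials have degree $-1$. An $\mathcal S$-complex over $R$ is a chain complex $(\widetilde C,\widetilde d)$ of finitely generated free graded $R$-modules with a graded decomposition $\widetilde C=C\oplus C[-1]\oplus\mathsf R$ in which $\widetilde d=\begin{pmatrix} d&0&0\\ v&-d&\delta_2\\ \delta_1&0&r\end{pmatrix}$; it is $r$-perfect if $\mathsf R$ is supported in even degrees (so $r=0$). A degree $k$ morphism is an $R$-linear map of degree $k$ of the form $\begin{pmatrix}\lambda&0&0\\ \mu&\lambda&\Delta_2\\ \Delta_1&0&\rho\end{pmatrix}$ with $\widetilde d'\widetilde\lambda=\widetilde\lambda\widetilde d$; composition is composition of maps. For such a morphism between $r$-perfect complexes set $\tau_0=\rho$ and for $i\ge0$, $\tau_{i+1}=\delta_1'v'^i\Delta_2+\Delta_1v^i\delta_2+\sum_{j=0}^{i-1}\delta_1'v'^j\mu v^{i-1-j}\delta_2$. A height $n$ morphism ($n\ge0$) is an even degree morphism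 between $r$-perfect $\mathcal S$-complexes with $\tau_j=0$ for all $0\le j<n$; it is strong height $n$ if in addition $\tau_n$ is an isomorphism. *)

(* Defs.v *)
From HB Require Import structures.
From mathcomp Require Import all_boot all_order all_algebra.
Set Implicit Arguments. Unset Strict Implicit. Unset Printing Implicit Defensive.
Import Order.TTheory GRing.Theory Num.Theory.
Local Open Scope ring_scope.

(* A finitely generated free graded R-module is represented by a homogeneous
   basis 'I_n together with a degree function deg : 'I_n -> int.
   An R-linear map S -> T (column-vector convention, A *m x) is a matrix
   'M_(#T, #S); it has degree k iff every nonzero entry A i j satisfies
   degT i = degS j + k. *)
Definition homog (n m : nat) (dS : 'I_n -> int) (dT : 'I_m -> int) (k : int)
  (R : comPzRingType) (A : 'M[R]_(m, n)) : Prop :=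
  forall i j, A i j != 0 -> dT i = (dS j + k)%R.

Definition mat3 (R : comPzRingType) (m1 m2 m3 n1 n2 n3 : nat)
  (A11 : 'M[R]_(m1, n1)) (A12 : 'M[R]_(m1, n2)) (A13 : 'M[R]_(m1, n3))
  (A21 : 'M[R]_(m2, n1)) (A22 : 'M[R]_(m2, n2)) (A23 : 'M[R]_(m2, n3))
  (A31 : 'M[R]_(m3, n1)) (A32 : 'M[R]_(m3, n2)) (A33 : 'M[R]_(m3, n3))
  : 'M[R]_((m1 + m2) + m3, (n1 + n2) + n3) :=
  block_mx (block_mx A11 A12 A21 A22) (col_mx A13 A23) (row_mx A31 A32) A33.

(* Degrees of the basis of C ⊕ C[-1] ⊕ R, where C[-1]_j = C_(j-1), so a basis
   element of C of degree e sits in degree e+1 in C[-1]. *)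
Definition degtot (a b : nat) (dC : 'I_a -> int) (dR : 'I_b -> int)
  (i : 'I_((a + a) + b)) : int :=
  match split i with
  | inl i' => match split i' with
              | inl i1 => dC i1
              | inr i2 => (dC i2 + 1)%R
              end
  | inr i3 => dR i3
  end.

(* An S-complex over R: C~ = C ⊕ C[-1] ⊕ R with C of rank a, R of rank b. *)
Record Scx (R : comPzRingType) := {
  rkC : nat;
  rkR : nat;
  degC : 'I_rkC -> int;
  degR : 'I_rkR -> int;
  sd : 'M[R]_rkC;
  sv : 'M[R]_rkC;
  sdelta1 : 'M[R]_(rkR, rkC);
  sdelta2 : 'M[R]_(rkC, rkR);
  sr : 'M[R]_rkR
}.
Arguments degC {R} s _.
Arguments degR {R} s _.

Definition dmat (R : comPzRingType) (C : Scx R) :=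
  mat3 (sd C) 0 0 (sv C) (- sd C) (sdelta2 C) (sdelta1 C) 0 (sr C).

Definition degT (R : comPzRingType) (C : Scx R) := degtot (degC C) (degR C).
Arguments degT {R} C _.

Definition is_Scx (R : comPzRingType) (C : Scx R) : Prop :=
  homog (degT C) (degT C) (-1) (dmat C) /\ dmat C *m dmat C = 0.

Definition rperfect (R : comPzRingType) (C : Scx R) : Prop :=
  is_Scx C /\ forall i, (2 %| degR C i)%Z.

Record Smor (R : comPzRingType) (C C' : Scx R) := {
  mlam : 'M[R]_(rkC C', rkC C);
  mmu : 'M[R]_(rkC C', rkC C);
  mDelta2 : 'M[R]_(rkC C', rkR C);
  mDelta1 : 'M[R]_(rkR C', rkC C);
  mrho : 'M[R]_(rkR C', rkR C)
}.

Definition mmat (R : comPzRingType) (C C' : Scx R) (f : Smor C C') :=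
  mat3 (mlam f) 0 0 (mmu f) (mlam f) (mDelta2 f) (mDelta1 f) 0 (mrho f).

Definition is_mor (R : comPzRingType) (C C' : Scx R) (k : int) (f : Smor C C')
  : Prop :=
  homog (degT C) (degT C') k (mmat f) /\ dmat C' *m mmat f = mmat f *m dmat C.

Definition tau (R : comPzRingType) (C C' : Scx R) (f : Smor C C') (i : nat)
  : 'M[R]_(rkR C', rkR C) :=
  match i with
  | 0 => mrho f
  | i'.+1 =>
      sdelta1 C' *m (sv C' ^+ i') *m mDelta2 f
      + mDelta1 f *m (sv C ^+ i') *m sdelta2 C
      + \sum_(j < i') (sdelta1 C' *m (sv C' ^+ j) *m mmu f
                        *m (sv C ^+ (i'.-1 - j)%N) *m sdelta2 C)
  end.

Definition height (R : comPzRingType) (C C' : Scx R) (k : int) (n : nat)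
  (f : Smor C C') : Prop :=
  [/\ is_mor k f, (2 %| k)%Z, rperfect C, rperfect C' &
      forall j, (j < n)%N -> tau f j = 0].

Definition strong_height (R : comPzRingType) (C C' : Scx R) (k : int) (n : nat)
  (f : Smor C C') : Prop :=
  height k n f /\
  exists g : 'M[R]_(rkR C, rkR C'), g *m tau f n = 1%:M /\ tau f n *m g = 1%:M.

(* Main.v *)
Require Import Defs.
From HB Require Import structures.
From mathcomp Require Import all_boot all_order all_algebra.
From mathcomp Require Import zify.
Import Order.TTheory GRing.Theory Num.Theory.
Local Open Scope ring_scope.
Set Implicit Arguments. Unset Strict Implicit.

Lemma mat3_mul (R : comPzRingType) m1 m2 m3 n1 n2 n3 p1 p2 p3
  (A11 : 'M[R]_(m1,n1)) (A12 : 'M[R]_(m1,n2)) (A13 : 'M[R]_(m1,n3))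
  (A21 : 'M[R]_(m2,n1)) (A22 : 'M[R]_(m2,n2)) (A23 : 'M[R]_(m2,n3))
  (A31 : 'M[R]_(m3,n1)) (A32 : 'M[R]_(m3,n2)) (A33 : 'M[R]_(m3,n3))
  (B11 : 'M[R]_(n1,p1)) (B12 : 'M[R]_(n1,p2)) (B13 : 'M[R]_(n1,p3))
  (B21 : 'M[R]_(n2,p1)) (B22 : 'M[R]_(n2,p2)) (B23 : 'M[R]_(n2,p3))
  (B31 : 'M[R]_(n3,p1)) (B32 : 'M[R]_(n3,p2)) (B33 : 'M[R]_(n3,p3)) :
  mat3 A11 A12 A13 A21 A22 A23 A31 A32 A33 *m mat3 B11 B12 B13 B21 B22 B23 B31 B32 B33 =
  mat3 (A11 *m B11 + A12 *m B21 + A13 *m B31)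
       (A11 *m B12 + A12 *m B22 + A13 *m B32)
       (A11 *m B13 + A12 *m B23 + A13 *m B33)
       (A21 *m B11 + A22 *m B21 + A23 *m B31)
       (A21 *m B12 + A22 *m B22 + A23 *m B32)
       (A21 *m B13 + A22 *m B23 + A23 *m B33)
       (A31 *m B11 + A32 *m B21 + A33 *m B31)
       (A31 *m B12 + A32 *m B22 + A33 *m B32)
       (A31 *m B13 + A32 *m B23 + A33 *m B33).
Proof.
rewrite /mat3 mulmx_block. rewrite !mulmx_block !mul_block_col !mul_col_row !mul_row_block !mul_row_col !mul_mx_row !mul_col_mx. rewrite !add_block_mx !add_col_mx !add_row_mx. by []. Qed.

Lemma mat3_inj (R : comPzRingType) m1 m2 m3 n1 n2 n3
  (A11 : 'M[R]_(m1,n1)) (A12 : 'M[R]_(m1,n2)) (A13 : 'M[R]_(m1,n3))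
  (A21 : 'M[R]_(m2,n1)) (A22 : 'M[R]_(m2,n2)) (A23 : 'M[R]_(m2,n3))
  (A31 : 'M[R]_(m3,n1)) (A32 : 'M[R]_(m3,n2)) (A33 : 'M[R]_(m3,n3))
  (B11 : 'M[R]_(m1,n1)) (B12 : 'M[R]_(m1,n2)) (B13 : 'M[R]_(m1,n3))
  (B21 : 'M[R]_(m2,n1)) (B22 : 'M[R]_(m2,n2)) (B23 : 'M[R]_(m2,n3))
  (B31 : 'M[R]_(m3,n1)) (B32 : 'M[R]_(m3,n2)) (B33 : 'M[R]_(m3,n3)) :
  mat3 A11 A12 A13 A21 A22 A23 A31 A32 A33 = mat3 B11 B12 B13 B21 B22 B23 B31 B32 B33 ->
  A11 = B11 /\ A12 = B12 /\ A13 = B13 /\ A21 = B21 /\ A22 = B22 /\ A23 = B23 /\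
      A31 = B31 /\ A32 = B32 /\ A33 = B33.
Proof.
rewrite /mat3 => /eq_block_mx [/eq_block_mx [-> -> -> ->] /eq_col_mx [-> ->] /eq_row_mx [-> ->] ->].
by [].
Qed.

Lemma mat3_0 (R : comPzRingType) m1 m2 m3 n1 n2 n3 :
  0 = mat3 (0 : 'M[R]_(m1,n1)) (0 : 'M[R]_(m1,n2)) (0 : 'M[R]_(m1,n3))
     (0 : 'M[R]_(m2,n1)) (0 : 'M[R]_(m2,n2)) (0 : 'M[R]_(m2,n3))
     (0 : 'M[R]_(m3,n1)) (0 : 'M[R]_(m3,n2)) (0 : 'M[R]_(m3,n3)).
Proof. by rewrite /mat3 block_mx0 col_mx0 row_mx0 block_mx0. Qed.

Lemma split_l m n (i : 'I_m) : split (lshift n i) = inl i.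
Proof. exact: (unsplitK (inl _ i)). Qed.
Lemma split_r m n (i : 'I_n) : split (rshift m i) = inr i.
Proof. exact: (unsplitK (inr _ i)). Qed.

Lemma homog_mul (R : comPzRingType) a b c (dS : 'I_a -> int) (dT : 'I_b -> int) (dU : 'I_c -> int)
  k l (A : 'M[R]_(b, a)) (B : 'M[R]_(c, b)) :
  homog dS dT k A -> homog dT dU l B -> homog dS dU (k + l) (B *m A).
Proof.
move=> hA hB i j; rewrite mxE => nz.
have [t /andP [h1 h2]] : exists t, (B i t != 0) && (A t j != 0).
  apply/existsP; apply: contraR nz => /existsPn H.
  apply/eqP; apply: big1 => t _.
  by case/nandP: (H t) => /negPn/eqP ->; rewrite ?mul0r ?mulr0.
rewrite (hB _ _ h1) (hA _ _ h2) addrA.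
by [].
Qed.

Lemma homog_pow (R : comPzRingType) a (d : 'I_a -> int) k (A : 'M[R]_a) q :
  homog d d k A -> homog d d (k * q%:Z) (A ^+ q).
Proof.
move=> hA; elim: q => [|q IH].
  move=> i j; rewrite expr0 mxE mulr0 addr0.
  have [->|ne] := eqVneq i j; first by [].
  by rewrite eqxx.
rewrite exprSr -mulmxE.
have -> : k * q.+1%:Z = k + k * q%:Z by rewrite intS mulrDr mulr1.
exact: (homog_mul hA IH).
Qed.

Lemma homog_odd0 (R : comPzRingType) a b (dS : 'I_a -> int) (dT : 'I_b -> int) k (X : 'M[R]_(b,a)) :
  homog dS dT k X -> (forall i, 2 %| dS i)%Z -> (forall i, 2 %| dT i)%Z -> ~~ (2 %| k)%Z -> X = 0.
Proof.
move=> hX hS hT hk; apply/matrixP => i j; rewrite mxE.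
apply/eqP; apply: contraR hk => /hX e.
have := hS j; have := hT i; rewrite e.
move=> /dvdzP [x hx] /dvdzP [y hy]; apply/dvdzP; exists (x - y); lia.
Qed.

Lemma odd_test (q : nat) : ~~ (2 %| (-2 + -2 * q%:Z + -1))%Z.
Proof. apply/negP => /dvdzP [x hx]; lia. Qed.

Ltac mkfront a r k :=
  lazymatch r with
  | ?x + ?r1 =>
      first [ unify x a; k constr:(@erefl _ r : r = a + r1)
            | mkfront a r1 ltac:(fun p =>
                k constr:(eq_trans (congr1 (fun z => x + z) p) (addrCA x a _))) ]
  | _ => unify r a; k constr:(esym (addr0 a) : r = a + 0)
  end.

Ltac cancel0 :=
  lazymatch goal with
  | |- - ?a + ?r = _ =>
      first [ mkfront a r ltac:(fun p =>
                refine (eq_trans (congr1 (fun z => - a + z) p) _); rewrite addKr)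
            | mkfront (- (- a)) r ltac:(fun p =>
                refine (eq_trans (congr1 (fun z => - a + z) p) _); rewrite addNKr) ];
      cancel0
  | |- ?a + ?r = _ => mkfront (- a) r ltac:(fun p =>
        refine (eq_trans (congr1 (fun z => a + z) p) _); rewrite addNKr); cancel0
  | |- _ => reflexivity
  end.

Ltac zsolve :=
  apply/eqP; rewrite -subr_eq0; apply/eqP;
  rewrite ?opprD ?opprK ?oppr0 ?addr0 ?add0r -?addrA; cancel0.
Ltac zsolve2 := apply/eqP; rewrite -subr_eq0; apply/eqP;
  rewrite ?opprD ?opprK ?oppr0 ?addr0 ?add0r -?addrA; cancel0.


Lemma hom_v (R : comPzRingType) (C : Scx R) : is_Scx C -> homog (degC C) (degC C) (-2) (sv C).
Proof.
case=> hH _ i j nz.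
move: (hH (lshift _ (rshift _ i)) (lshift _ (lshift _ j))).
rewrite /dmat /mat3 block_mxEul block_mxEdl /degT /degtot !split_l split_r => /(_ nz).
lia.
Qed.

Lemma hom_d1 (R : comPzRingType) (C : Scx R) : is_Scx C -> homog (degC C) (degR C) (-1) (sdelta1 C).
Proof.
case=> hH _ i j nz.
move: (hH (rshift _ i) (lshift _ (lshift _ j))).
rewrite /dmat /mat3 block_mxEdl row_mxEl /degT /degtot !split_l split_r => /(_ nz).
lia.
Qed.

Lemma hom_d2 (R : comPzRingType) (C : Scx R) : is_Scx C -> homog (degR C) (degC C) (-2) (sdelta2 C).
Proof.
case=> hH _ i j nz.
move: (hH (lshift _ (rshift _ i)) (rshift _ j)).
rewrite /dmat /mat3 block_mxEur col_mxEd /degT /degtot !split_l !split_r => /(_ nz).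
lia.
Qed.

Lemma rp_r (R : comPzRingType) (C : Scx R) : rperfect C -> sr C = 0.
Proof.
case=> [[hH _] hE]; apply: (@homog_odd0 _ _ _ (degR C) (degR C) (-1)) => //.
  move=> i j nz.
  move: (hH (rshift _ i) (rshift _ j)).
  by rewrite /dmat /mat3 block_mxEdr /degT /degtot !split_r => /(_ nz).
Qed.

Lemma rp_d1vd2 (R : comPzRingType) (C : Scx R) q : rperfect C ->
  sdelta1 C *m sv C ^+ q *m sdelta2 C = 0.
Proof.
case=> [hS hE].
have h := homog_mul (homog_mul (hom_d2 hS) (homog_pow (q:=q) (hom_v hS))) (hom_d1 hS).
rewrite -mulmxA; apply: (homog_odd0 h) => //.
by apply/negP => /dvdzP [x hx]; lia.
Qed.

Lemma rp_rels (R : comPzRingType) (C : Scx R) : rperfect C ->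
  [/\ sd C *m sv C = sv C *m sd C + sdelta2 C *m sdelta1 C,
      sd C *m sdelta2 C = 0 & sdelta1 C *m sd C = 0].
Proof.
move=> hP; have hr := rp_r hP; case: hP => [[_ hM] _].
move: hM; rewrite /dmat mat3_mul (mat3_0 R) hr.
move=> /mat3_inj [_ [_ [_ [e21 [_ [e23 [e31 _]]]]]]].
move: e21 e23 e31; rewrite !mul0mx !mulmx0 !addr0 !add0r => e21 e23 e31.
split.
- apply/eqP; rewrite -subr_eq0 -oppr_eq0; apply/eqP; rewrite -e21 ?mulNmx.
  zsolve.
- by apply/eqP; rewrite -oppr_eq0 -mulNmx e23.
- by [].
Qed.

Lemma mxpowSr (R : comPzRingType) m n (X : 'M[R]_(m, n)) (A : 'M[R]_n) q :
  X *m A ^+ q.+1 = X *m A ^+ q *m A.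
Proof. by rewrite exprSr -mulmxE mulmxA. Qed.

Lemma mxpowSl (R : comPzRingType) m n (X : 'M[R]_(m, n)) (A : 'M[R]_n) q :
  X *m A ^+ q.+1 = X *m A *m A ^+ q.
Proof. by rewrite exprS -mulmxE mulmxA. Qed.

Lemma rp_dvd2 (R : comPzRingType) (C : Scx R) q m (X : 'M[R]_(m, rkC C)) : rperfect C ->
  X *m sd C *m sv C ^+ q *m sdelta2 C = 0.
Proof.
move=> hP; have [hdv hdd2 _] := rp_rels hP.
elim: q X => [|q IH] X.
  by rewrite expr0 mulmx1 -mulmxA hdd2 mulmx0.
rewrite mxpowSl -(mulmxA X) hdv mulmxDr mulmxDl mulmxDl mulmxA IH add0r.
by rewrite !mulmxA -!(mulmxA (X *m sdelta2 C)) -mulmxA (rp_d1vd2 q hP) !mulmx0.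
Qed.

Lemma rp_d1vd (R : comPzRingType) (C : Scx R) q : rperfect C ->
  sdelta1 C *m sv C ^+ q *m sd C = 0.
Proof.
move=> hP; have [hdv _ hd1d] := rp_rels hP.
elim: q => [|q IH].
  by rewrite expr0 mulmx1.
have e : sv C *m sd C = sd C *m sv C - sdelta2 C *m sdelta1 C.
  by rewrite hdv addrK.
rewrite mxpowSr -mulmxA e mulmxDr mulmxN !mulmxA IH mul0mx (rp_d1vd2 q hP) mul0mx.
by rewrite subrr.
Qed.

Lemma rp_d1vd2X (R : comPzRingType) (C : Scx R) q m (X : 'M[R]_(m, rkR C)) : rperfect C ->
  X *m sdelta1 C *m sv C ^+ q *m sdelta2 C = 0.
Proof.
move=> hP; transitivity (X *m (sdelta1 C *m sv C ^+ q *m sdelta2 C)); first by rewrite !mulmxA.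
by rewrite (rp_d1vd2 q hP) mulmx0.
Qed.

Lemma rp_dvX (R : comPzRingType) (C : Scx R) m (X : 'M[R]_(m, rkC C)) : rperfect C ->
  X *m sd C *m sv C = X *m sv C *m sd C + X *m sdelta2 C *m sdelta1 C.
Proof. by move=> hP; have [hdv _ _] := rp_rels hP; rewrite -mulmxA hdv mulmxDr !mulmxA. Qed.

Lemma mo_rels (R : comPzRingType) (C C' : Scx R) k (f : Smor C C') :
  rperfect C -> rperfect C' -> is_mor k f ->
  [/\ sv C' *m mlam f = mlam f *m sv C + sd C' *m mmu f + mmu f *m sd C
        + mDelta2 f *m sdelta1 C - sdelta2 C' *m mDelta1 f,
      mlam f *m sdelta2 C = sdelta2 C' *m mrho f - sd C' *m mDelta2 f &
      sdelta1 C' *m mlam f = mDelta1 f *m sd C + mrho f *m sdelta1 C].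
Proof.
move=> hC hC' [_ hM].
move: hM; rewrite /dmat /mmat !mat3_mul (rp_r hC) (rp_r hC').
move=> /mat3_inj [_ [_ [_ [e21 [_ [e23 [e31 _]]]]]]].
move: e21 e23 e31; rewrite !mul0mx !mulmx0 !addr0 !add0r !mulNmx => e21 e23 e31.
split.
- rewrite (_ : sv C' *m mlam f = (sv C' *m mlam f - sd C' *m mmu f + sdelta2 C' *m mDelta1 f)
       + sd C' *m mmu f - sdelta2 C' *m mDelta1 f); last by zsolve.
  rewrite e21; zsolve.
- rewrite -e23; zsolve.
- by rewrite e31.
Qed.

Lemma mo2X (R : comPzRingType) (C C' : Scx R) k (f : Smor C C') m (X : 'M[R]_(m, rkC C')) :
  rperfect C -> rperfect C' -> is_mor k f ->
  X *m sv C' *m mlam f = X *m mlam f *m sv C + X *m sd C' *m mmu f + X *m mmu f *m sd C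
        + X *m mDelta2 f *m sdelta1 C - X *m sdelta2 C' *m mDelta1 f.
Proof.
move=> hC hC' hf; have [e _ _] := mo_rels hC hC' hf.
by rewrite -mulmxA e !mulmxDr mulmxN !mulmxA.
Qed.

Lemma mo3X (R : comPzRingType) (C C' : Scx R) k (f : Smor C C') m (X : 'M[R]_(m, rkC C')) :
  rperfect C -> rperfect C' -> is_mor k f ->
  X *m mlam f *m sdelta2 C = X *m sdelta2 C' *m mrho f - X *m sd C' *m mDelta2 f.
Proof.
move=> hC hC' hf; have [_ e _] := mo_rels hC hC' hf.
by rewrite -mulmxA e !mulmxDr mulmxN !mulmxA.
Qed.

Definition Yb (R : comPzRingType) (C C' : Scx R) (f : Smor C C') (a : nat)
  : 'M[R]_(rkR C', rkC C) :=
  mDelta1 f *m sv C ^+ a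
  + \sum_(j < a) (sdelta1 C' *m sv C' ^+ j *m mmu f *m sv C ^+ (a.-1 - j)%N).
Fact Y_key : unit. Proof. exact: tt. Qed.
Definition Y := locked_with Y_key Yb.
Lemma YE : Y = Yb. Proof. exact: locked_withE. Qed.

Lemma Y0 (R : comPzRingType) (C C' : Scx R) (f : Smor C C') : Y f 0 = mDelta1 f.
Proof. by rewrite YE /Yb big_ord0 expr0 mulmx1 addr0. Qed.

Lemma tauS (R : comPzRingType) (C C' : Scx R) (f : Smor C C') a :
  tau f a.+1 = sdelta1 C' *m sv C' ^+ a *m mDelta2 f + Y f a *m sdelta2 C.
Proof. by rewrite /= YE /Yb mulmxDl mulmx_suml addrA. Qed.

Lemma tau0 (R : comPzRingType) (C C' : Scx R) (f : Smor C C') : tau f 0 = mrho f.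
Proof. by []. Qed.

Lemma Yrec (R : comPzRingType) (C C' : Scx R) (f : Smor C C') a :
  Y f a.+1 = Y f a *m sv C + sdelta1 C' *m sv C' ^+ a *m mmu f.
Proof.
rewrite YE /Yb big_ord_recr /= subnn expr0 mulmx1 mulmxDl mulmx_suml mxpowSr -addrA; congr (_ + _).
congr (_ + _); apply: eq_bigr => j _ /=.
have hj : (a - j)%N = (a.-1 - j).+1 by case: j => j /= hj; lia.
by rewrite hj mxpowSr.
Qed.

Lemma lemA (R : comPzRingType) (C C' : Scx R) k (f : Smor C C') a :
  rperfect C -> rperfect C' -> is_mor k f ->
  sdelta1 C' *m sv C' ^+ a *m mlam f =
  \sum_(s < a.+1) (tau f s *m sdelta1 C *m sv C ^+ (a - s)%N) + Y f a *m sd C.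
Proof.
move=> hC hC' hf; have [_ _ e4] := mo_rels hC hC' hf.
elim: a => [|a IH].
  by rewrite big_ord1 expr0 !mulmx1 Y0 e4 /= addrC.
rewrite mxpowSr (mo2X _ hC hC' hf) IH (rp_d1vd a hC') mul0mx addr0.
rewrite (rp_d1vd2 a hC') mul0mx subr0.
rewrite mulmxDl (rp_dvX _ hC) mulmx_suml.
rewrite [in RHS]big_ord_recr tauS Yrec /= subnn expr0 mulmx1.
have -> : \sum_(i < a.+1) (tau f i *m sdelta1 C *m sv C ^+ (a - i)%N *m sv C) =
          \sum_(i < a.+1) (tau f (widen_ord (leqnSn a.+1) i) *m sdelta1 C *m sv C ^+ (a.+1 - i)%N).
  apply: eq_bigr => i _ /=.
  have hi : (a.+1 - i)%N = (a - i).+1 by case: i => i /= hi; lia.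
  by rewrite hi mxpowSr.
rewrite ?mulmxDl ?mulmxA.
zsolve.
Qed.

Definition comp (R : comPzRingType) (C C' C'' : Scx R) (f : Smor C C') (g : Smor C' C'')
  : Smor C C'' :=
  {| mlam := mlam g *m mlam f;
     mmu := mmu g *m mlam f + mlam g *m mmu f + mDelta2 g *m mDelta1 f;
     mDelta2 := mlam g *m mDelta2 f + mDelta2 g *m mrho f;
     mDelta1 := mDelta1 g *m mlam f + mrho g *m mDelta1 f;
     mrho := mrho g *m mrho f |}.

Lemma comp_mmat (R : comPzRingType) (C C' C'' : Scx R) (f : Smor C C') (g : Smor C' C'') :
  mmat (comp f g) = mmat g *m mmat f.
Proof.
rewrite /mmat mat3_mul /=.
by rewrite !mul0mx !mulmx0 !addr0 !add0r.
Qed.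

Lemma YH (R : comPzRingType) (C C' C'' : Scx R) k k' (f : Smor C C') (g : Smor C' C'') a q :
  rperfect C -> rperfect C' -> rperfect C'' -> is_mor k f -> is_mor k' g ->
  Y (comp f g) a *m sv C ^+ q *m sdelta2 C =
  Y g a *m mlam f *m sv C ^+ q *m sdelta2 C
  + \sum_(s < a.+1) (tau g s *m Y f (a - s)%N *m sv C ^+ q *m sdelta2 C).
Proof.
move=> hC hC' hC'' hf hg.
elim: a q => [|a IH] q.
  by rewrite big_ord1 !Y0 /= !mulmxDl.
rewrite Yrec !mulmxDl -(mxpowSl (Y (comp f g) a)) IH.
rewrite [in RHS]big_ord_recr tauS Yrec /= subnn Y0.
have -> : \sum_(i < a.+1) (tau g (widen_ord (leqnSn a.+1) i) *m Y f (a.+1 - i)%N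
              *m sv C ^+ q *m sdelta2 C) =
   \sum_(i < a.+1) (tau g i *m Y f (a - i)%N *m sv C ^+ q.+1 *m sdelta2 C)
   + \sum_(i < a.+1) (tau g i *m sdelta1 C' *m sv C' ^+ (a - i)%N *m mmu f *m sv C ^+ q *m sdelta2 C).
  rewrite -big_split; apply: eq_bigr => i _ /=.
  have hi : (a.+1 - i)%N = (a - i).+1 by case: i => i /= hi; lia.
  by rewrite hi Yrec mxpowSl !mulmxDr !mulmxDl !mulmxA.
rewrite !mulmxDr !mulmxDl ?mulmxA.
rewrite (lemA a hC' hC'' hg) (mo2X _ hC hC' hf).
rewrite (mxpowSl (Y g a *m mlam f)).
rewrite ?mulmxDl ?mulmxN ?mulNmx !mulmx_suml.
rewrite (rp_dvd2 _ _ hC) (rp_d1vd2X _ _ hC).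
zsolve.
Qed.

Lemma tau_comp (R : comPzRingType) (C C' C'' : Scx R) k k' (f : Smor C C') (g : Smor C' C'') a :
  rperfect C -> rperfect C' -> rperfect C'' -> is_mor k f -> is_mor k' g ->
  tau (comp f g) a = \sum_(s < a.+1) (tau g s *m tau f (a - s)%N).
Proof.
move=> hC hC' hC'' hf hg.
case: a => [|a]; first by rewrite big_ord1.
rewrite tauS.
have H := YH a 0 hC hC' hC'' hf hg.
have H2 : \sum_(s < a.+1) (tau g s *m Y f (a - s)%N *m sv C ^+ 0 *m sdelta2 C) =
          \sum_(s < a.+1) (tau g s *m Y f (a - s)%N *m sdelta2 C).
  by apply: eq_bigr => i _; rewrite expr0 mulmx1.
rewrite H2 expr0 !mulmx1 in H; rewrite H.
rewrite [in RHS]big_ord_recr (tauS g a).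
have -> : tau f (a.+1 - @ord_max a.+1)%N = mrho f by rewrite /= subnn.
have -> : \sum_(i < a.+1) (tau g (widen_ord (leqnSn a.+1) i) *m tau f (a.+1 - i)%N) =
   \sum_(i < a.+1) (tau g i *m sdelta1 C' *m sv C' ^+ (a - i)%N *m mDelta2 f)
   + \sum_(i < a.+1) (tau g i *m Y f (a - i)%N *m sdelta2 C).
  rewrite -big_split; apply: eq_bigr => i _ /=.
  have hi : (a.+1 - i)%N = (a - i).+1 by case: i => i /= hi; lia.
  by rewrite hi tauS !mulmxDr !mulmxA.
rewrite /= !mulmxDr ?mulmxA (lemA a hC' hC'' hg) (mo3X _ hC hC' hf).
rewrite ?mulmxDl ?mulmxN ?mulNmx !mulmx_suml.
zsolve.
Qed.

Unset Implicit Arguments.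

Theorem lemma2p15 (R : comPzRingType) (C C' C'' : Scx R) (k k' : int)
  (n m : nat) (f : Smor C C') (g : Smor C' C'') :
  rperfect C -> rperfect C' -> rperfect C'' ->
  height k n f -> height k' m g ->
  exists h : Smor C C'',
    mmat h = mmat g *m mmat f /\
    height (k' + k) (n + m) h /\
    (strong_height k n f -> strong_height k' m g ->
     strong_height (k' + k) (n + m) h).
Proof.
move=> hC hC' hC'' [hf hk _ _ hfz] [hg hk' _ _ hgz].
have hz : forall j, (j < n + m)%N -> tau (comp f g) j = 0.
  move=> j hj; rewrite (tau_comp j hC hC' hC'' hf hg); apply: big1 => s _.
  case: (ltnP s m) => hs; first by rewrite (hgz s hs) mul0mx.
  have := ltn_ord s; move=> hsj.
  by rewrite (hfz (j - s)%N) ?mulmx0 //; lia.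
have hH : height (k' + k) (n + m) (comp f g).
  split => //.
  - split.
      rewrite comp_mmat addrC; exact: (homog_mul hf.1 hg.1).
    by rewrite comp_mmat mulmxA hg.2 -mulmxA hf.2 mulmxA.
  - exact: rpredD.
exists (comp f g); split; first exact: comp_mmat.
split => //.
move=> [_ [Gf [Gf1 Gf2]]] [_ [Gg [Gg1 Gg2]]]; split => //.
have ht : tau (comp f g) (n + m) = tau g m *m tau f n.
  have hm : (m < (n + m).+1)%N by lia.
  rewrite (tau_comp (n + m) hC hC' hC'' hf hg) (bigD1 (Ordinal hm)) //=.
  rewrite big1 ?addr0; first by rewrite addnK.
  move=> s hs; have hs' : (s : nat) != m.
    by apply: contra hs => /eqP e; apply/eqP; apply: val_inj.
  case: (ltnP s m) => h1; first by rewrite (hgz s h1) mul0mx.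
  have h2 : (n + m - s < n)%N by have := ltn_ord s; move: hs' h1; lia.
  by rewrite (hfz _ h2) mulmx0.
exists (Gf *m Gg); rewrite ht; split.
- by rewrite mulmxA -(mulmxA Gf) Gg1 mulmx1 Gf1.
- by rewrite mulmxA -(mulmxA _ (tau f n)) Gf2 mulmx1 Gg2.
Qed.
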